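(* If $X$ is a prime permutation graph, then ${\rm Aut}(X)$ is isomorphic to a subgroup of $\mathbb{Z}_2^2$.
   Context: A permutation graph is a graph $X$ such that both $X$ and its complement $\overline X$ are comparability graphs (have transitive orientations). A module of $X$ is a set $M\subseteq V(X)$ such that every vertex outside $M$ is adjacent to all of $M$ or to none; $X$ is prime if its only modules are $V(X)$ and singletons. *)

(* Defs.v *)
From mathcomp Require Import all_boot all_order all_algebra all_fingroup.
Set Implicit Arguments. Unset Strict Implicit. Unset Printing Implicit Defensive.
Import GroupScope.

Definition simple_graph (T : finType) (adj : rel T) :=
  symmetric adj /\ irreflexive adj.

Definition complement_graph (T : finType) (adj : rel T) : rel T :=
  fun x y => (x != y) && ~~ adj x y.

Definition transitive_orientation (T : finType) (adj : rel T) (o : rel T) :=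
  [/\ forall x y, o x y -> adj x y,
      forall x y, adj x y -> (o x y || o y x),
      forall x y, o x y -> ~~ o y x
    & transitive o].

Definition comparability_graph (T : finType) (adj : rel T) :=
  exists o : rel T, transitive_orientation adj o.

Definition permutation_graph (T : finType) (adj : rel T) :=
  comparability_graph adj /\ comparability_graph (complement_graph adj).

Definition is_module (T : finType) (adj : rel T) (M : {set T}) :=
  forall v, v \notin M ->
    (forall m, m \in M -> adj v m) \/ (forall m, m \in M -> ~~ adj v m).

Definition prime_graph (T : finType) (adj : rel T) :=
  forall M : {set T}, is_module adj M -> M = setT \/ #|M| <= 1.

Definition aut_set (T : finType) (adj : rel T) : {set {perm T}} :=
  [set p : {perm T} | [forall x, [forall y, adj (p x) (p y) == adj x y]]].

Lemma aut_group_set (T : finType) (adj : rel T) : group_set (aut_set adj).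
Proof.
apply/group_setP; split.
  by rewrite inE; apply/forallP => x; apply/forallP => y; rewrite !perm1.
move=> p q; rewrite !inE => /forallP Hp /forallP Hq.
apply/forallP => x; apply/forallP => y; rewrite !permM.
by rewrite (eqP (forallP (Hq (p x)) (p y))) (eqP (forallP (Hp x) y)).
Qed.

Canonical aut_group (T : finType) (adj : rel T) := Group (aut_group_set adj).

Definition Z2sq := ('Z_2 * 'Z_2)%type.

(* Main.v *)
Require Import Defs.
From mathcomp Require Import all_boot all_order all_algebra all_fingroup.
From Stdlib Require Import Classical ClassicalEpsilon.
Set Implicit Arguments. Unset Strict Implicit. Unset Printing Implicit Defensive.

Inductive cls (T : finType) (adj : rel T) (x0 y0 : T) : T -> T -> Prop :=
| cls0 : cls adj x0 y0 x0 y0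
| clsS : forall x y, cls adj x0 y0 x y -> cls adj x0 y0 y x
| clsG : forall x y z, cls adj x0 y0 x y -> adj x z -> y != z -> ~~ adj y z ->
    cls adj x0 y0 x z.

Lemma cls_adj (T : finType) (adj : rel T) x0 y0 x y :
  symmetric adj -> adj x0 y0 -> cls adj x0 y0 x y -> adj x y.
Proof.
move=> sym e; elim=> [|u v _ H|u v w _ _ H _ _] //; by rewrite sym.
Qed.

Lemma cls_trans (T : finType) (adj : rel T) x0 y0 x1 y1 x y :
  cls adj x0 y0 x1 y1 -> cls adj x1 y1 x y -> cls adj x0 y0 x y.
Proof.
move=> H1; elim=> // [u v _ H|u v w _ H a b c].
  exact: clsS.
exact: clsG H a b c.
Qed.

Lemma cls_sym (T : finType) (adj : rel T) x0 y0 x y :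
  symmetric adj -> adj x0 y0 -> cls adj x0 y0 x y -> cls adj x y x0 y0.
Proof.
move=> sym e H; elim: H => [|u v H IH|u v w H IH a b c].
- exact: cls0.
- by apply: cls_trans IH; apply: clsS; apply: cls0.
- apply: cls_trans IH; apply: (@clsG _ _ _ _ u w v); first exact: cls0.
  + exact: cls_adj H.
  + by rewrite eq_sym.
  + by rewrite sym.
Qed.

Lemma cls_module (T : finType) (adj : rel T) x0 y0 v :
  symmetric adj -> adj x0 y0 -> (forall w, ~ cls adj x0 y0 v w) ->
  forall x y, cls adj x0 y0 x y -> adj v x = adj v x0.
Proof.
move=> sym e nV.
have cst : forall x y, cls adj x0 y0 x y -> adj v x -> adj v y.
  move=> x y H ax; apply/negPn/negP => ay.
  have vy : y != v by apply/eqP => yv; apply: (nV x); rewrite -yv; exact: clsS.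
  rewrite sym in ay; apply: (nV x); apply: clsS; apply: clsG H _ vy ay; by rewrite sym.
move=> x y; elim=> [|u w H IH|u w z _ IH _ _ _] //.
apply/idP/idP => h.
  by rewrite -IH; apply: cst (clsS H) h.
by apply: cst H _; rewrite IH.
Qed.

Definition pb (P : Prop) : bool := if excluded_middle_informative P then true else false.
Lemma pbP P : reflect P (pb P).
Proof. by rewrite /pb; case: excluded_middle_informative => h; constructor. Qed.

Lemma cls_span (T : finType) (adj : rel T) x0 y0 :
  simple_graph adj -> prime_graph adj -> adj x0 y0 ->
  forall u, exists w, cls adj x0 y0 u w.
Proof.
move=> [sym irr] pr e.
pose M := [set u | pb (exists w, cls adj x0 y0 u w)].
have memM u : (u \in M) = pb (exists w, cls adj x0 y0 u w) by rewrite inE.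
have modM : is_module adj M.
  move=> v; rewrite memM => /pbP nv.
  have nV : forall w, ~ cls adj x0 y0 v w by move=> w h; apply: nv; exists w.
  have key : forall m, m \in M -> adj v m = adj v x0.
    move=> m; rewrite memM => /pbP [w h]; exact: cls_module h.
  case: (boolP (adj v x0)) => h; [left|right]; move=> m /key ->; by rewrite ?h.
have x0M : x0 \in M by rewrite memM; apply/pbP; exists y0; exact: cls0.
have y0M : y0 \in M by rewrite memM; apply/pbP; exists x0; apply: clsS; exact: cls0.
have nxy : x0 != y0 by apply/eqP => exy; move: e; rewrite exy irr.
case: (pr M modM) => [MT|cM].
  move=> u; have : u \in M by rewrite MT inE.
  by rewrite memM => /pbP.
have : #|[set x0; y0]| <= #|M|.
  by apply: subset_leq_card; apply/subsetP => z /set2P [] ->.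
by rewrite cards2 nxy => h; have := leq_trans h cM.
Qed.

Lemma tri_inv (T : finType) (adj : rel T) a b c :
  symmetric adj -> adj a b -> adj a c ->
  ~ cls adj b c a b -> ~ cls adj b c a c ->
  forall x y, cls adj b c x y ->
  [/\ adj a x, adj a y, ~ cls adj b c a x & ~ cls adj b c a y].
Proof.
move=> sym ab ac nb nc x y; elim=> [|u v _ [h1 h2 h3 h4]|u v w H [ax ay nx ny] axz yz nyz].
- by split.
- by split.
have Hxz := clsG H axz yz nyz.
have az : adj a w.
  apply/negPn/negP => naz; case: (eqVneq w a) => [wa|wa].
    by apply: nx; apply: clsS; rewrite -wa.
  apply: nx; apply: clsS; apply: clsG Hxz _ wa _; by rewrite sym.
split=> // h; apply: ny; apply: clsG h ay _ _; [by rewrite eq_sym | by rewrite sym].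
Qed.

Lemma tri_fact (T : finType) (adj : rel T) a b c :
  simple_graph adj -> prime_graph adj -> adj a b -> adj b c -> adj a c ->
  cls adj b c a b \/ cls adj b c a c.
Proof.
move=> [sym irr] pr ab bc ac; apply: NNPP => /not_or_and [nb nc].
have [w h] := cls_span (conj sym irr) pr bc a.
have [aa _ _ _] := tri_inv sym ab ac nb nc h.
by rewrite irr in aa.
Qed.

Lemma one_class (T : finType) (adj : rel T) x0 y0 u w :
  simple_graph adj -> prime_graph adj -> adj x0 y0 -> adj u w ->
  cls adj x0 y0 u w.
Proof.
move=> [sym irr] pr e uw.
have sg : simple_graph adj by [].
have [w' h] := cls_span sg pr e u.
have uw' := cls_adj sym e h.
apply: cls_trans h _.
case: (eqVneq w w') => [->|ww]; first exact: cls0.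
case: (boolP (adj w w')) => aww; last first.
  apply: clsG (cls0 _ _ _) uw _ _; [by rewrite eq_sym | by rewrite sym].
have w'u : adj w' u by rewrite sym.
have w'w : adj w' w by rewrite sym.
have wu : adj w u by rewrite sym.
have [A1|A2] := @tri_fact _ _ w' u w sg pr w'u uw w'w.
  apply: cls_sym => //; apply: clsS; exact: A1.
have [B1|B2] := @tri_fact _ _ w u w' sg pr wu uw' aww.
  exact: clsS.
have C := cls_sym sym uw A2.
apply: cls_trans (clsS B2) _; exact: C.
Qed.

Lemma orient_gamma (T : finType) (adj : rel T) o x y z :
  symmetric adj -> transitive_orientation adj o ->
  adj x y -> adj x z -> ~~ adj y z -> o x z = o x y.
Proof.
move=> sym [h1 h2 h3 h4] xy xz nyz.
case: (boolP (o x y)) => oxy.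
  apply/negPn/negP => nxz.
  have ozx : o z x by move: (h2 _ _ xz); rewrite (negbTE nxz).
  by move: nyz; rewrite sym (h1 _ _ (h4 _ _ _ ozx oxy)).
have oyx : o y x by move: (h2 _ _ xy); rewrite (negbTE oxy).
apply/negP => oxz.
by move: nyz; rewrite (h1 _ _ (h4 _ _ _ oyx oxz)).
Qed.

Lemma orient_flip (T : finType) (adj : rel T) o x y :
  transitive_orientation adj o -> adj x y -> o y x = ~~ o x y.
Proof.
move=> [h1 h2 h3 h4] xy; case: (boolP (o x y)) => oxy.
  exact: negbTE (h3 _ _ oxy).
by move: (h2 _ _ xy); rewrite (negbTE oxy).
Qed.

Lemma orient_uniq (T : finType) (adj : rel T) o o' :
  simple_graph adj -> prime_graph adj ->
  transitive_orientation adj o -> transitive_orientation adj o' ->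
  (forall x y, o' x y = o x y) \/ (forall x y, o' x y = o y x).
Proof.
move=> sg pr to to'; have [sym irr] := sg.
have nonedge : forall r x y, transitive_orientation adj r -> ~~ adj x y -> r x y = false.
  move=> r x y [h1 _ _ _] nxy; apply/negP => /h1; by rewrite (negbTE nxy).
case: (boolP [exists x, exists y, adj x y]); last first.
  move=> /existsPn nE; left => x y.
  have nxy : ~~ adj x y by apply/negP => xy; move: (nE x) => /existsPn /(_ y); rewrite xy.
  by rewrite !(nonedge _ _ _ _ nxy).
move=> /existsP [x0 /existsP [y0 e]].
have inv : forall x y, cls adj x0 y0 x y ->
    (o' x y == o x y) = (o' x0 y0 == o x0 y0).
  move=> x y; elim=> [//|u v H IH|u v w H IH uw vw nvw].
    have uv := cls_adj sym e H.
    rewrite (orient_flip to' uv) (orient_flip to uv) -IH.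
    by case: (o' u v); case: (o u v).
  have uv := cls_adj sym e H.
  by rewrite (orient_gamma sym to' uv uw nvw) (orient_gamma sym to uv uw nvw).
case: (boolP (o' x0 y0 == o x0 y0)) => h; [left|right]; move=> x y.
  case: (boolP (adj x y)) => xy; last by rewrite !(nonedge _ _ _ _ xy).
  by apply/eqP; rewrite inv ?h //; apply: one_class.
case: (boolP (adj x y)) => xy; last first.
  rewrite (nonedge _ _ _ to' xy) nonedge //; by rewrite sym.
have := inv x y (one_class sg pr e xy); rewrite (negbTE h) (orient_flip to xy).
by case: (o' x y); case: (o x y).
Qed.
Import GroupScope.

Lemma compl_simple (T : finType) (adj : rel T) :
  simple_graph adj -> simple_graph (complement_graph adj).
Proof.
move=> [sym irr]; split.
  by move=> x y; rewrite /complement_graph eq_sym sym.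
by move=> x; rewrite /complement_graph eqxx.
Qed.

Lemma compl_prime (T : finType) (adj : rel T) :
  prime_graph adj -> prime_graph (complement_graph adj).
Proof.
move=> pr M mM; apply: pr => v vM.
have ne : forall m, m \in M -> v != m.
  by move=> m mM'; apply/eqP => vm; move: vM; rewrite vm mM'.
case: (mM v vM) => H; [right|left]; move=> m mM'; have := H m mM';
  rewrite /complement_graph ne //=.
by move/negbNE.
Qed.

Lemma orient_perm (T : finType) (r o : rel T) (g : {perm T}) :
  (forall x y, r (g x) (g y) = r x y) -> transitive_orientation r o ->
  transitive_orientation r (fun x y => o (g x) (g y)).
Proof.
move=> pg [h1 h2 h3 h4]; split.
- by move=> x y /h1; rewrite pg.
- by move=> x y; rewrite -pg => /h2.
- by move=> x y /h3.
- by move=> y x z a b; exact: h4 a b.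
Qed.

Definition eps (T : finType) (r o : rel T) (g : {perm T}) :=
  [exists x, exists y, r x y && (o (g x) (g y) != o x y)].

Lemma eps_edge (T : finType) (r o : rel T) (g : {perm T}) x y :
  simple_graph r -> prime_graph r -> transitive_orientation r o ->
  (forall x y, r (g x) (g y) = r x y) -> r x y ->
  o (g x) (g y) = o x y (+) eps r o g.
Proof.
move=> sg pr to pg xy.
case: (orient_uniq sg pr to (orient_perm pg to)) => H.
  have -> : eps r o g = false.
    apply/negbTE/existsPn => a; apply/existsPn => b; by rewrite H eqxx andbF.
  by rewrite H addbF.
have -> : eps r o g = true.
  apply/existsP; exists x; apply/existsP; exists y.
  by rewrite xy H (orient_flip to xy); case: (o x y).
by rewrite H (orient_flip to xy) addbT.
Qed.

Lemma eps_mul (T : finType) (r o : rel T) (g h : {perm T}) :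
  simple_graph r -> prime_graph r -> transitive_orientation r o ->
  (forall x y, r (g x) (g y) = r x y) -> (forall x y, r (h x) (h y) = r x y) ->
  eps r o (g * h) = eps r o g (+) eps r o h.
Proof.
move=> sg pr to pg ph.
have pgh : forall x y, r ((g * h) x) ((g * h) y) = r x y by move=> x y; rewrite !permM ph pg.
case: (boolP [exists x, exists y, r x y]); last first.
  move=> /existsPn nE.
  have z : forall k : {perm T}, eps r o k = false.
    move=> k; apply/negbTE/existsPn => a; apply/existsPn => b.
    by move: (nE a) => /existsPn /(_ b) /negbTE ->.
  by rewrite !z.
move=> /existsP [x0 /existsP [y0 e]].
have at0 : forall k : {perm T}, (forall x y, r (k x) (k y) = r x y) ->
    eps r o k = (o (k x0) (k y0) != o x0 y0).
  move=> k pk; rewrite (eps_edge sg pr to pk e).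
  by case: (o x0 y0); case: (eps r o k).
rewrite (at0 _ pgh) !permM (eps_edge sg pr to ph); last by rewrite pg.
rewrite (eps_edge sg pr to pg e).
by case: (o x0 y0); case: (eps r o g); case: (eps r o h).
Qed.

Lemma eps_ker (T : finType) (r o : rel T) (g : {perm T}) :
  simple_graph r -> prime_graph r -> transitive_orientation r o ->
  (forall x y, r (g x) (g y) = r x y) -> eps r o g = false ->
  forall x y, o (g x) (g y) = o x y.
Proof.
move=> sg pr to pg e0 x y.
case: (boolP (r x y)) => xy.
  by rewrite (eps_edge sg pr to pg xy) e0 addbF.
have [h1 _ _ _] := to.
have nf : forall a b, ~~ r a b -> o a b = false.
  by move=> a b nab; apply/negP => /h1; rewrite (negbTE nab).
by rewrite !nf // pg.
Qed.

Lemma total_fix (T : finType) (L : rel T) (g : {perm T}) :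
  irreflexive L -> transitive L -> (forall x y, x != y -> L x y || L y x) ->
  (forall x y, L (g x) (g y) = L x y) -> g = 1.
Proof.
move=> irr tr tot pg.
pose rk x := #|[set y | L y x]|.
have rkg : forall x, rk (g x) = rk x.
  move=> x; rewrite /rk -(card_preimset _ (@perm_inj _ g)).
  have -> : g @^-1: [set y | L y (g x)] = [set y | L y x].
    by apply/setP => y; rewrite !inE pg.
  by [].
have lt : forall x y, L x y -> rk x < rk y.
  move=> x y xy; apply: proper_card; apply/properP; split.
    by apply/subsetP => z; rewrite !inE => zx; exact: tr zx xy.
  by exists x; rewrite !inE ?irr.
apply/permP => x; rewrite perm1; apply/eqP/negPn/negP => ne.
case/orP: (tot _ _ ne) => /lt; by rewrite rkg ltnn.
Qed.
Import GroupScope.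

Lemma lin_props (T : finType) (adj o q : rel T) :
  simple_graph adj -> transitive_orientation adj o ->
  transitive_orientation (complement_graph adj) q ->
  [/\ irreflexive (fun x y => o x y || q x y),
      transitive (fun x y => o x y || q x y)
    & forall x y, x != y -> (o x y || q x y) || (o y x || q y x)].
Proof.
move=> [sym irr] [o1 o2 o3 o4] [q1 q2 q3 q4].
have oA : forall x y, o x y -> adj x y := o1.
have qN : forall x y, q x y -> ~~ adj x y.
  by move=> x y /q1; rewrite /complement_graph => /andP [].
split.
- move=> x; apply/negP => /orP [/oA|/q1]; by rewrite ?irr // /complement_graph eqxx.
- move=> y x z /orP [xy|xy] /orP [yz|yz].
  + by rewrite (o4 _ _ _ xy yz).
  + case: (boolP (adj x z)) => xz.
      case/orP: (o2 _ _ xz) => [->//|zx].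
      by move: (qN _ _ yz); rewrite sym (oA _ _ (o4 _ _ _ zx xy)).
    have cxz : complement_graph adj x z.
      rewrite /complement_graph xz andbT; apply/eqP => exz; move: (qN _ _ yz).
      by rewrite -exz sym (oA _ _ xy).
    case/orP: (q2 _ _ cxz) => [->|zx]; first by rewrite orbT.
    by move: (qN _ _ (q4 _ _ _ yz zx)); rewrite sym (oA _ _ xy).
  + case: (boolP (adj x z)) => xz.
      case/orP: (o2 _ _ xz) => [->//|zx].
      by move: (qN _ _ xy); rewrite sym (oA _ _ (o4 _ _ _ yz zx)).
    have cxz : complement_graph adj x z.
      rewrite /complement_graph xz andbT; apply/eqP => exz; move: (qN _ _ xy).
      by rewrite exz sym (oA _ _ yz).
    case/orP: (q2 _ _ cxz) => [->|zx]; first by rewrite orbT.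
    by move: (qN _ _ (q4 _ _ _ zx xy)); rewrite sym (oA _ _ yz).
  + by rewrite (q4 _ _ _ xy yz) orbT.
- move=> x y ne; case: (boolP (adj x y)) => xy.
    by case/orP: (o2 _ _ xy) => ->; rewrite ?orbT.
  have cxy : complement_graph adj x y by rewrite /complement_graph ne xy.
  by case/orP: (q2 _ _ cxy) => ->; rewrite ?orbT.
Qed.

Definition z1 : 'Z_2 := inZp 1.
Lemma z1z1 : z1 * z1 = 1. Proof. by apply/val_inj. Qed.
Definition zb (b : bool) : 'Z_2 := if b then z1 else 1.
Lemma zbD a b : zb (a (+) b) = zb a * zb b.
Proof. by case: a; case: b; rewrite /zb /= ?z1z1 ?mulg1 ?mul1g. Qed.
Lemma zb_inj : injective zb.
Proof. by case; case. Qed.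

Lemma autP (T : finType) (adj : rel T) (g : {perm T}) :
  g \in aut_group adj -> forall x y, adj (g x) (g y) = adj x y.
Proof.
rewrite inE => /forallP H x y; exact/eqP/(forallP (H x) y).
Qed.

Lemma autC (T : finType) (adj : rel T) (g : {perm T}) :
  g \in aut_group adj -> forall x y,
  complement_graph adj (g x) (g y) = complement_graph adj x y.
Proof.
move=> /autP H x y; by rewrite /complement_graph H (inj_eq (@perm_inj _ g)).
Qed.

Theorem mainTheorem6 (T : finType) (adj : rel T) :
  simple_graph adj -> permutation_graph adj -> prime_graph adj ->
  exists H : {group Z2sq}, aut_group adj \isog H.
Proof.
move=> sg [[o to] [q tq]] pr.
have sgC := compl_simple sg.
have prC := compl_prime pr.
pose D := aut_group adj.
pose f := fun g : {perm T} =>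
  ((zb (eps adj o g), zb (eps (complement_graph adj) q g)) : Z2sq).
have fM : {in D &, {morph f : x y / x * y}}.
  move=> g h Dg Dh.
  rewrite /f (eps_mul sg pr to (autP Dg) (autP Dh)).
  by rewrite (eps_mul sgC prC tq (autC Dg) (autC Dh)) !zbD.
pose fm := Morphism fM.
have inj : 'injm fm.
  apply/injmP => g h Dg Dh /= [] /zb_inj e1 /zb_inj e2.
  have Dk : g * h^-1 \in D by rewrite groupM ?groupV.
  have Dh' : h^-1 \in D by rewrite groupV.
  have e0 : forall r s, simple_graph r -> prime_graph r -> transitive_orientation r s ->
      (forall k, k \in D -> forall x y, r (k x) (k y) = r x y) ->
      eps r s g = eps r s h -> eps r s (g * h^-1) = false.
    move=> r s sr pr' ts pD e.
    have e1' : eps r s (h * h^-1) = false.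
      rewrite mulgV; apply/negbTE/existsPn => a; apply/existsPn => b.
      by rewrite !perm1 eqxx andbF.
    rewrite (eps_mul sr pr' ts (pD _ Dh) (pD _ Dh')) in e1'.
    rewrite (eps_mul sr pr' ts (pD _ Dg) (pD _ Dh')) e.
    by [].
  have k1 := e0 _ _ sg pr to (fun k Dk => autP Dk) e1.
  have k2 := e0 _ _ sgC prC tq (fun k Dk => autC Dk) e2.
  have Ho := eps_ker sg pr to (autP Dk) k1.
  have Hq := eps_ker sgC prC tq (autC Dk) k2.
  have [L1 L2 L3] := lin_props sg to tq.
  have kid : g * h^-1 = 1.
    apply: total_fix L1 L2 L3 _ => x y; by rewrite Ho Hq.
  by apply/eqP; rewrite eq_mulgV1 kid.
exists (fm @* D)%G.
exact: sub_isog (subxx _) inj.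
Qed.
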